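(* Let $\sigma=\langle\mathcal V,\mathcal C,S,B\rangle$ be an approval-based multi-winner election, let $\mathcal A\subseteq\mathcal C$ be non-empty, and let $F\in\mathfrak F^{\mathrm{opt}}_{\sigma,\mathcal A}$. If $c^*\in\mathcal A$ satisfies $\mathrm{Supp}_F(c^* )>\mathrm{maxMin}(\sigma,\mathcal A)$, then $$\mathrm{maxMin}(\sigma,\mathcal A)=\mathrm{maxMin}(\sigma,\mathcal A\setminus\{c^*\}).$$
   Context: An approval-based multi-winner election is a tuple $\sigma=\langle \mathcal V,\mathcal C,S,B\rangle$, where $\mathcal V$ is a finite set of agents, $\mathcal C$ is a finite set of candidates, $1\le S\le|\mathcal C|$ is an integer, and $B:2^{\mathcal C}\to\mathbb N$ gives, for each $\mathcal A\subseteq\mathcal C$, the number $B(\mathcal A)$ of agents whose ballot is exactly $\mathcal A$ (with $\sum_{\mathcal A}B(\mathcal A)\le|\mathcal V|$). For a non-empty $\mathcal A\subseteq\mathcal C$, the family $\mathfrak F_{\sigma,\mathcal A}$ is the set of all $F:2^{\mathcal C}\times\mathcal A\to\mathbb R$ such that: - $F(y,c)\ge0$ for all $y$ and $c$; - $F(y,c)=0$ if $c\notin y$; - $\sum_{c\in\mathcal A\cap y}F(y,c)=B(y)$ whenever $y\cap\mathcal A\neq\emptyset$. We write $\mathrm{Supp}_F(c)=\sum_yF(y,c)$ and $\mathrm{maxMin}(\sigma,\mathcal A)=\sup_{F\in\mathfrak F_{\sigma,\mathcal A}}\min_{c\in\mathcal A}\mathrm{Supp}_F(c)$. We also write $\mathfrak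 F^{\mathrm{opt}}_{\sigma,\mathcal A}=\{F\in\mathfrak F_{\sigma,\mathcal A}:\mathrm{Supp}_F(c)\ge\mathrm{maxMin}(\sigma,\mathcal A)\ \forall c\in\mathcal A\}$. *)

(* Defs.v *)
From HB Require Import structures.
From mathcomp Require Import all_boot all_order all_algebra.
Set Implicit Arguments. Unset Strict Implicit. Unset Printing Implicit Defensive.
Import Order.TTheory GRing.Theory Num.Theory.
Local Open Scope ring_scope.

(* Candidates: a finite type C.  Ballots: B : {set C} -> nat.
   A flow F : {set C} -> C -> R; only its values on candidates c \in A matter
   (the paper's domain is 2^C x A). *)

Definition in_family (R : realFieldType) (C : finType) (B : {set C} -> nat)
    (A : {set C}) (F : {set C} -> C -> R) : Prop :=
  (forall (y : {set C}) c, c \in A -> 0 <= F y c) /\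
  (forall (y : {set C}) c, c \in A -> c \notin y -> F y c = 0) /\
  (forall y : {set C}, y :&: A != set0 -> \sum_(c in A :&: y) F y c = (B y)%:R).

Definition Supp (R : realFieldType) (C : finType) (F : {set C} -> C -> R) (c : C) : R :=
  \sum_(y : {set C}) F y c.

Definition is_min_on (R : realFieldType) (C : finType) (A : {set C}) (f : C -> R) (v : R) : Prop :=
  (exists2 c, c \in A & v = f c) /\ (forall c, c \in A -> v <= f c).

Definition is_maxMin (R : realFieldType) (C : finType) (B : {set C} -> nat)
    (A : {set C}) (m : R) : Prop :=
  (forall F v, in_family B A F -> is_min_on A (Supp F) v -> v <= m) /\
  (forall u, (forall F v, in_family B A F -> is_min_on A (Supp F) v -> v <= u) -> m <= u).

Definition in_opt_family (R : realFieldType) (C : finType) (B : {set C} -> nat)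
    (A : {set C}) (m : R) (F : {set C} -> C -> R) : Prop :=
  in_family B A F /\ (forall c, c \in A -> m <= Supp F c).

(* Main.v *)
Require Import Defs.
From HB Require Import structures.
From mathcomp Require Import all_boot all_order all_algebra ring lra.
Import Order.TTheory GRing.Theory Num.Theory.
Local Open Scope ring_scope.

Section H.
Context {R : realFieldType} {C : finType} {B : {set C} -> nat}.

Lemma ex_min (A : {set C}) (f : C -> R) :
  A != set0 -> exists v, is_min_on A f v.
Proof.
case/set0Pn=> c0 hc0.
case: (arg_minP (P := fun c => c \in A) f hc0) => c hc hmin.
exists (f c); split; first by exists c.
by move=> d hd; apply: hmin.
Qed.

Lemma fam_conv (A : {set C}) (F G : {set C} -> C -> R) (t : R) :
  in_family B A F -> in_family B A G -> 0 <= t <= 1 ->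
  in_family B A (fun y c => (1 - t) * F y c + t * G y c).
Proof.
move=> [F1 [F2 F3]] [G1 [G2 G3]] /andP[t0 t1]; split; [|split].
- move=> y c hc; apply: addr_ge0; apply: mulr_ge0.
  + by rewrite subr_ge0.
  + by apply: F1.
  + by [].
  + by apply: G1.
- by move=> y c hc hy; rewrite F2 // G2 // !mulr0 addr0.
- move=> y hy; rewrite big_split /= -!mulr_sumr F3 // G3 //; lra.
Qed.

Lemma Supp_conv (F G : {set C} -> C -> R) (t : R) c :
  Supp (fun y c => (1 - t) * F y c + t * G y c) c = (1 - t) * Supp F c + t * Supp G c.
Proof. by rewrite /Supp big_split /= -!mulr_sumr. Qed.

Lemma Supp_ge0 (A : {set C}) (F : {set C} -> C -> R) c :
  in_family B A F -> c \in A -> 0 <= Supp F c.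
Proof. by move=> [F1 _] hc; apply: sumr_ge0 => y _; apply: F1. Qed.

Lemma setI_notin (A y : {set C}) cs : cs \notin y -> A :&: y = (A :\ cs) :&: y.
Proof.
move=> h; apply/setP => x; rewrite !inE.
by case: (eqVneq x cs) => [->|hne]; [rewrite (negbTE h) !andbF | by []].
Qed.

End H.

Theorem lemma4 (R : realFieldType) (C : finType) (nV S : nat) (B : {set C} -> nat)
    (hS : (1 <= S <= #|C|)%N)
    (hB : (\sum_(y : {set C}) B y <= nV)%N)
    (A : {set C}) (hA : A != set0)
    (m : R) (hm : is_maxMin B A m)
    (F : {set C} -> C -> R) (hF : in_opt_family B A m F)
    (cs : C) (hcs : cs \in A) (hsupp : m < Supp F cs) :
  is_maxMin B (A :\ cs) m.
Proof.
case: hm => hm1 hm2; case: hF => hFf hFo.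
have hF' := hFf; case: hF' => [F1 [F2 F3]].
have m0 : 0 <= m.
  case: (ex_min _ (Supp F) hA) => w hw.
  apply: le_trans (hm1 _ _ hFf hw).
  case: hw => [[c hc ->] _]; exact: Supp_ge0 hFf hc.
have hA' : A :\ cs != set0.
  apply/negP => /eqP h0.
  have : Supp F cs <= m.
    apply: hm1 hFf _; split; first by exists cs.
    move=> c hc; have : c \notin A :\ cs by rewrite h0 inE.
    by rewrite !inE hc andbT negbK => /eqP ->.
  by rewrite leNgt hsupp.
split.
- move=> G v hG hv; rewrite leNgt; apply/negP => hmv.
  case: hG => [G1 [G2 G3]].
  pose e (y : {set C}) : R := if (cs \in y) && ((A :\ cs) :&: y == set0) then (B y)%:R else 0.
  pose G' (y : {set C}) (c : C) := if c == cs then e y else G y c.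
  have hG' : in_family B A G'.
    split; [|split].
    + move=> y c hc; rewrite /G'; case: eqP => [_|/eqP hne].
        by rewrite /e; case: ifP.
      by apply: G1; rewrite !inE hne.
    + move=> y c hc hy; rewrite /G'; case: eqP => [hce|/eqP hne].
        by rewrite /e -hce (negbTE hy).
      by apply: G2 => //; rewrite !inE hne.
    + move=> y hy.
      have sum' : \sum_(c in (A :\ cs) :&: y) G' y c = \sum_(c in (A :\ cs) :&: y) G y c.
        apply: eq_bigr => c; rewrite !inE /G' => /andP[/andP[/negbTE -> _] _] //.
      case hcy: (cs \in y).
      * have hin : cs \in A :&: y by rewrite inE hcs hcy.
        rewrite (big_setD1 _ hin) /=.
        have -> : (A :&: y) :\ cs = (A :\ cs) :&: y.
          by apply/setP => x; rewrite !inE; case: (x == cs); case: (x \in A).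
        rewrite sum' /G' eqxx /e hcy /=.
        case: eqP => [h0|/eqP h0].
          by rewrite h0 big_set0 addr0.
        by rewrite G3 ?add0r // setIC.
      * have hny : cs \notin y by rewrite hcy.
        rewrite (setI_notin A y cs hny) sum' G3 //; rewrite setIC.
        by rewrite -(setI_notin A y cs hny) setIC.
  set s := Supp F cs.
  have hss : m < s by [].
  have s0 : 0 < s by lra.
  pose t := (s - m) / (s + 1).
  have t0 : 0 < t by apply: divr_gt0; lra.
  have t1 : t < 1 by rewrite ltr_pdivrMr; lra.
  have hts : m < (1 - t) * s.
    have -> : (1 - t) * s = s * (1 + m) / (s + 1).
      rewrite /t; field; lra.
    rewrite ltr_pdivlMr; last lra.
    nra.
  have hH' : in_family B A (fun y c => (1 - t) * F y c + t * G' y c).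
    apply: fam_conv => //; apply/andP; split; lra.
  case: (ex_min _ (Supp (fun y c => (1 - t) * F y c + t * G' y c)) hA) => w hw.
  have := hm1 _ _ hH' hw.
  case: hw => [[c hc ->] _]; rewrite Supp_conv.
  apply/negP; rewrite -ltNge.
  case: (eqVneq c cs) => [->|hne].
  + have : 0 <= Supp G' cs by apply: Supp_ge0 hG' hcs.
    rewrite -/s => hg.
    have : 0 <= t * Supp G' cs by apply: mulr_ge0 => //; lra.
    lra.
  + have hc' : c \in A :\ cs by rewrite !inE hne.
    have eqS : Supp G' c = Supp G c.
      by apply: eq_bigr => y _; rewrite /G' (negbTE hne).
    rewrite eqS.
    have h1 : v <= Supp G c by case: hv => _ /(_ c hc').
    have h2 : m <= Supp F c by apply: hFo.
    have h3 : (1 - t) * m <= (1 - t) * Supp F c by apply: ler_wpM2l => //; lra.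
    have h4 : t * v <= t * Supp G c by apply: ler_wpM2l => //; lra.
    have h5 : 0 < t * (v - m) by apply: mulr_gt0; lra.
    lra.
- move=> u hu.
  pose p y := odflt cs [pick x in (A :\ cs) :&: y].
  pose G y c := F y c + (if c == p y then F y cs else 0).
  have hG : in_family B (A :\ cs) G.
    split; [|split].
    + move=> y c; rewrite !inE => /andP[_ hc]; rewrite /G.
      apply: addr_ge0; first by apply: F1.
      by case: ifP => // _; apply: F1.
    + move=> y c; rewrite !inE => /andP[hne hc] hy; rewrite /G F2 // add0r.
      case: eqP => // hp; exfalso.
      move: hp; rewrite /p; case: pickP => [x|_ /=].
        by rewrite !inE => /andP[_ hx] /= hcx; move: hy; rewrite hcx hx.
      by move=> hcs'; move: hne; rewrite hcs' eqxx.
    + move=> y hy.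
      have hy' : y :&: A != set0.
        move: hy; apply: contra => /eqP h; apply/eqP/setP => x.
        move/setP: h => /(_ x); rewrite !inE.
        by case: (x \in y); case: (x \in A); rewrite ?andbF ?andbT.
      rewrite big_split /= -(F3 _ hy').
      have -> : \sum_(i in (A :\ cs) :&: y) (if i == p y then F y cs else 0) = F y cs.
        have hp : p y \in (A :\ cs) :&: y.
          rewrite /p; case: pickP => [x //|h0].
          by case/set0Pn: hy => x hx; move: (h0 x); rewrite [_ :&: y]setIC hx.
        rewrite (big_setD1 _ hp) /= eqxx big1 ?addr0 //.
        by move=> i; rewrite !inE => /andP[/negbTE -> _].
      case hcy: (cs \in y).
      * have hin : cs \in A :&: y by rewrite inE hcs hcy.
        rewrite [in RHS](big_setD1 _ hin) /= addrC.
        have -> : (A :&: y) :\ cs = (A :\ cs) :&: y.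
          by apply/setP => x; rewrite !inE; case: (x == cs); case: (x \in A).
        by [].
      * have hny : cs \notin y by rewrite hcy.
        rewrite -(setI_notin A y cs hny).
        by rewrite F2 // ?addr0 // hcy.
  case: (ex_min _ (Supp G) hA') => w hw.
  apply: le_trans (hu _ _ hG hw).
  case: hw => [[c hc ->] _].
  move: hc; rewrite !inE => /andP[_ hc].
  apply: le_trans (hFo c hc) _.
  apply: ler_sum => y _; rewrite /G lerDl.
  by case: ifP => // _; apply: F1.
Qed.
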